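(* Let $I\subset\mathbb R$ be an open interval, $r:I\to\mathbb R$ a smooth positive function, $C\neq 0$ a constant, $\eta\in\{1,-1\}$, and fix one choice of sign $\pm$. Assume that $$R(u):=(r r''+(r')^2+1)^2 \pm 4C^2 r^2\,(1+(r')^2)>0 \quad\text{on } I.$$ Let $\varphi:I\to\mathbb R$ be any function with $$\varphi'(u)=\eta\,\frac{\sqrt{R(u)}}{r(u)\,(1+r'(u)^2)},$$ and let $x_1,x_2:I\to\mathbb R$ be any functions with $$x_1'(u)=\sqrt{1+r'(u)^2}\,\cos\varphi(u),\qquad x_2'(u)=\sqrt{1+r'(u)^2}\,\sin\varphi(u).$$ Then $c(u)=(x_1(u),x_2(u),r(u),0)$ is a spacelike curve parameterized by arc-length with $x_1'x_2''-x_1''x_2'\neq 0$ on $I$, and the rotational surface of elliptic type $z(u,v)=(x_1(u),x_2(u),r(u)\cos v,r(u)\sin v)$ generated by $c$ is a Lorentz surface in $\mathbb E^4_2$ with constant mean curvature, namely $\langle H,H\rangle=\pm C^2$ (the same sign as chosen in $R$). Conversely, let $z(u,v)=(x_1(u),x_2(u),r(u)\cos v,r(u)\sin v)$, $u\in J$, $v\in[0,2\pi)$, be a rotational surface of elliptic type whose generating curve $(x_1,x_2,r,0)$ is spacelike, parameterized by arc-length ($(x_1')^2+(x_2')^2-(r')^2=1$), with $r>0$, and suppose $x_1'x_2''-x_1''x_2'\neq0$ on an open interval $I\subset J$ and the surface has constant mean curvature ($\langle H,H\rangle$ a nonzero constant) on $I$. Then on $I$ the functions $x_1,x_2$ arise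 from $r$ exactly by the construction above for some constant $C\neq0$, some sign $\pm$, some $\eta\in\{\pm1\}$ and suitable constants of integration.
   Context: $\mathbb E^4_2$ is $\mathbb R^4$ with the neutral metric $\langle\cdot,\cdot\rangle$ given by $g_0=dx_1^2+dx_2^2-dx_3^2-dx_4^2$. A vector $v$ is spacelike if $\langle v,v\rangle>0$, timelike if $\langle v,v\rangle<0$. A surface in $\mathbb E^4_2$ is Lorentz if its induced metric has signature $(1,1)$ (then its normal space also has signature $(1,1)$). For a surface with second fundamental form $\sigma$, the mean curvature vector is $H=\frac12\operatorname{tr}\sigma$ (trace with respect to the induced metric); the surface is said to have constant mean curvature if $\langle H,H\rangle$ is a nonzero constant. A rotational surface of elliptic type is a surface $z(u,v)=(x_1(u),x_2(u),r(u)\cos v,r(u)\sin v)$ obtained by rotating a curve $(x_1(u),x_2(u),r(u),0)$ with $r>0$ about the plane spanned by $e_1=(1,0,0,0)$ and $e_2=(0,1,0,0)$. *)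

(* Defs.v *)
From Stdlib Require Import Reals.
Open Scope R_scope.

Definition is_open_interval (I : R -> Prop) : Prop :=
  (exists x, I x) /\
  (forall x, I x -> exists eps, 0 < eps /\ forall y, Rabs (y - x) < eps -> I y) /\
  (forall x y w, I x -> I w -> x <= y -> y <= w -> I y).

Definition smooth_on (I : R -> Prop) (f : R -> R) : Prop :=
  exists d : nat -> R -> R,
    (forall x, I x -> d O x = f x) /\
    (forall n x, I x -> derivable_pt_lim (d n) x (d (S n) x)).

(* Vectors of R^4 and the neutral metric g0 = dx1^2+dx2^2-dx3^2-dx4^2 of E^4_2. *)
Record V4 : Type := mkV4 { c1 : R; c2 : R; c3 : R; c4 : R }.

Definition ip (a b : V4) : R :=
  c1 a * c1 b + c2 a * c2 b - c3 a * c3 b - c4 a * c4 b.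

Definition vadd (a b : V4) : V4 :=
  mkV4 (c1 a + c1 b) (c2 a + c2 b) (c3 a + c3 b) (c4 a + c4 b).
Definition vscal (k : R) (a : V4) : V4 :=
  mkV4 (k * c1 a) (k * c2 a) (k * c3 a) (k * c4 a).
Definition vsub (a b : V4) : V4 := vadd a (vscal (-1) b).

Definition deriv4 (f : R -> V4) (x : R) (l : V4) : Prop :=
  derivable_pt_lim (fun t => c1 (f t)) x (c1 l) /\
  derivable_pt_lim (fun t => c2 (f t)) x (c2 l) /\
  derivable_pt_lim (fun t => c3 (f t)) x (c3 l) /\
  derivable_pt_lim (fun t => c4 (f t)) x (c4 l).

Definition part_u (z zu : R -> R -> V4) (D : R -> R -> Prop) : Prop :=
  forall u v, D u v -> deriv4 (fun t => z t v) u (zu u v).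
Definition part_v (z zv : R -> R -> V4) (D : R -> R -> Prop) : Prop :=
  forall u v, D u v -> deriv4 (fun t => z u t) v (zv u v).

Definition partials2 (z : R -> R -> V4) (D : R -> R -> Prop)
  (zu zv zuu zuv zvv : R -> R -> V4) : Prop :=
  part_u z zu D /\ part_v z zv D /\
  part_u zu zuu D /\ part_v zu zuv D /\ part_v zv zvv D.

Definition metric_det (zu zv : V4) : R :=
  ip zu zu * ip zv zv - ip zu zv * ip zu zv.

(* Lorentz: the induced metric has signature (1,1), i.e. negative determinant *)
Definition lorentz_at (zu zv : V4) : Prop := metric_det zu zv < 0.

Definition normal_part (zu zv w : V4) : V4 :=
  let d := metric_det zu zv in
  let gi11 := ip zv zv / d in
  let gi12 := - ip zu zv / d in
  let gi22 := ip zu zu / d in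
  let a := gi11 * ip w zu + gi12 * ip w zv in
  let b := gi12 * ip w zu + gi22 * ip w zv in
  vsub w (vadd (vscal a zu) (vscal b zv)).

(* Mean curvature vector H = (1/2) tr sigma = (1/2) g^{ij} (z_ij)^normal *)
Definition mean_curv_vec (zu zv zuu zuv zvv : V4) : V4 :=
  let d := metric_det zu zv in
  let gi11 := ip zv zv / d in
  let gi12 := - ip zu zv / d in
  let gi22 := ip zu zu / d in
  vscal (1/2)
    (vadd (vscal gi11 (normal_part zu zv zuu))
      (vadd (vscal (2 * gi12) (normal_part zu zv zuv))
            (vscal gi22 (normal_part zu zv zvv)))).

Definition HH (zu zv zuu zuv zvv : V4) : R :=
  let H := mean_curv_vec zu zv zuu zuv zvv in ip H H.

Definition rot_surface (x1 x2 r : R -> R) : R -> R -> V4 :=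
  fun u v => mkV4 (x1 u) (x2 u) (r u * cos v) (r u * sin v).

Definition profile (x1 x2 r : R -> R) : R -> V4 :=
  fun u => mkV4 (x1 u) (x2 u) (r u) 0.

(* R(u) = (r r'' + r'^2 + 1)^2 + s * 4 C^2 r^2 (1 + r'^2),  s = +1 or -1 *)
Definition Rfun (s C : R) (r r1 r2 : R -> R) (u : R) : R :=
  (r u * r2 u + r1 u ^ 2 + 1) ^ 2 + s * (4 * C ^ 2 * r u ^ 2 * (1 + r1 u ^ 2)).

(* Main.v *)
Require Import Defs.
From Stdlib Require Import Reals Lra.
From Coquelicot Require Import Coquelicot.
Open Scope R_scope.
Lemma deq f x l l' : derivable_pt_lim f x l -> l = l' -> derivable_pt_lim f x l'.
Proof. intros H ->; exact H. Qed.
Lemma dmul f g x l1 l2 : derivable_pt_lim f x l1 -> derivable_pt_lim g x l2 ->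
  derivable_pt_lim (fun t => f t * g t) x (l1 * g x + f x * l2).
Proof. intros; exact (derivable_pt_lim_mult f g x l1 l2 H H0). Qed.
Lemma dplus f g x l1 l2 : derivable_pt_lim f x l1 -> derivable_pt_lim g x l2 ->
  derivable_pt_lim (fun t => f t + g t) x (l1 + l2).
Proof. intros; exact (derivable_pt_lim_plus f g x l1 l2 H H0). Qed.
Lemma dminus f g x l1 l2 : derivable_pt_lim f x l1 -> derivable_pt_lim g x l2 ->
  derivable_pt_lim (fun t => f t - g t) x (l1 - l2).
Proof. intros; exact (derivable_pt_lim_minus f g x l1 l2 H H0). Qed.
Lemma dopp f x l : derivable_pt_lim f x l -> derivable_pt_lim (fun t => - f t) x (- l).
Proof. intros; exact (derivable_pt_lim_opp f x l H). Qed.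
Lemma dconst c x : derivable_pt_lim (fun _ => c) x 0.
Proof. exact (derivable_pt_lim_const c x). Qed.
Lemma did x : derivable_pt_lim (fun t => t) x 1.
Proof. exact (derivable_pt_lim_id x). Qed.
Lemma dcosc f x l : derivable_pt_lim f x l -> derivable_pt_lim (fun t => cos (f t)) x (- sin (f x) * l).
Proof. intros; exact (derivable_pt_lim_comp f cos x l _ H (derivable_pt_lim_cos (f x))). Qed.
Lemma dsinc f x l : derivable_pt_lim f x l -> derivable_pt_lim (fun t => sin (f t)) x (cos (f x) * l).
Proof. intros; exact (derivable_pt_lim_comp f sin x l _ H (derivable_pt_lim_sin (f x))). Qed.
Lemma dsqrtc f x l : 0 < f x -> derivable_pt_lim f x l ->
  derivable_pt_lim (fun t => sqrt (f t)) x (/ (2 * sqrt (f x)) * l).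
Proof. intros; exact (derivable_pt_lim_comp f sqrt x l _ H0 (derivable_pt_lim_sqrt _ H)). Qed.
Lemma dsq f x l : derivable_pt_lim f x l -> derivable_pt_lim (fun t => f t ^ 2) x (2 * f x * l).
Proof. intros H. eapply deq. apply (dmul f (fun t => f t * 1)). exact H.
  eapply deq. apply dmul. exact H. apply dconst. reflexivity. simpl; ring. Qed.
Lemma dcos x : derivable_pt_lim (fun t => cos t) x (- sin x).
Proof. exact (derivable_pt_lim_cos x). Qed.
Lemma dsin x : derivable_pt_lim (fun t => sin t) x (cos x).
Proof. exact (derivable_pt_lim_sin x). Qed.

Lemma ball_locally (x : R) (P : R -> Prop) :
  (exists eps, 0 < eps /\ forall y, Rabs (y - x) < eps -> P y) -> locally x P.
Proof. intros [e [He H]]. exists (mkposreal e He). intros y Hy. apply H. exact Hy. Qed.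

Lemma dext f g x l : (exists eps, 0 < eps /\ forall y, Rabs (y - x) < eps -> f y = g y) ->
  derivable_pt_lim f x l -> derivable_pt_lim g x l.
Proof. intros H Hd. apply is_derive_Reals. apply is_derive_ext_loc with f.
  apply ball_locally; exact H. apply is_derive_Reals; exact Hd. Qed.

Lemma cext f g x : (exists eps, 0 < eps /\ forall y, Rabs (y - x) < eps -> f y = g y) ->
  continuity_pt f x -> continuity_pt g x.
Proof. intros H Hc. apply continuity_pt_filterlim. apply continuity_pt_filterlim in Hc.
  apply (continuous_ext_loc g f). apply ball_locally. exact H. exact Hc. Qed.
Lemma HH_formula (a b p a' b' p' r c s X1 X2 X3 X4 : R) :
  r <> 0 -> a^2+b^2-p^2 = 1 -> a*a'+b*b'-p*p' = 0 -> c^2+s^2 = 1 ->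
  HH (mkV4 a b (p*c) (p*s)) (mkV4 0 0 (-(r*s)) (r*c)) (mkV4 a' b' (p'*c) (p'*s))
     (mkV4 X1 X2 X3 X4) (mkV4 0 0 (-(r*c)) (-(r*s)))
  = 1/4*(a'^2+b'^2-p'^2-2*p'/r-(1+p^2)/r^2).
Proof.
  intros Hr E1 E2 E3.
  set (zu := mkV4 a b (p*c) (p*s)). set (zv := mkV4 0 0 (-(r*s)) (r*c)).
  set (zuu := mkV4 a' b' (p'*c) (p'*s)). set (zvv := mkV4 0 0 (-(r*c)) (-(r*s))).
  assert (I1 : ip zu zu = 1) by (unfold ip, zu; cbn [Defs.c1 Defs.c2 Defs.c3 Defs.c4]; rewrite <- E1; replace (p^2) with (p^2*(c^2+s^2)) by (rewrite E3; ring); ring).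
  assert (I2 : ip zu zv = 0) by (unfold ip, zu, zv; cbn [Defs.c1 Defs.c2 Defs.c3 Defs.c4]; ring).
  assert (I3 : ip zv zv = - r^2). (unfold ip, zv; cbn [Defs.c1 Defs.c2 Defs.c3 Defs.c4]; replace (-r^2) with (-r^2*(c^2+s^2)) by (rewrite E3; ring); ring).
  assert (I4 : ip zuu zu = 0) by (unfold ip, zu, zuu; cbn [Defs.c1 Defs.c2 Defs.c3 Defs.c4]; rewrite <- E2; replace (p*p') with (p*p'*(c^2+s^2)) by (rewrite E3; ring); ring).
  assert (I5 : ip zuu zv = 0) by (unfold ip, zuu, zv; cbn [Defs.c1 Defs.c2 Defs.c3 Defs.c4]; ring).
  assert (I6 : ip zvv zu = p*r) by (unfold ip, zvv, zu; cbn [Defs.c1 Defs.c2 Defs.c3 Defs.c4]; replace (p*r) with (p*r*(c^2+s^2)) by (rewrite E3; ring); ring).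
  assert (I7 : ip zvv zv = 0) by (unfold ip, zvv, zv; cbn [Defs.c1 Defs.c2 Defs.c3 Defs.c4]; ring).
  assert (HV : mean_curv_vec zu zv zuu (mkV4 X1 X2 X3 X4) zvv =
    mkV4 ((a'+p*a/r)/2) ((b'+p*b/r)/2) (c*(p'+(1+p^2)/r)/2) (s*(p'+(1+p^2)/r)/2)).
  { unfold mean_curv_vec, normal_part, metric_det; cbv zeta.
    rewrite I1, I2, I3, I4, I5, I6, I7.
    assert (D: r^2 <> 0) by (apply pow_nonzero; auto).
    replace (1 * - r ^ 2 - 0 * 0) with (-r^2) by ring.
    replace (- r ^ 2 / - r ^ 2) with 1 by (field; auto).
    replace (- 0 / - r ^ 2) with 0 by (field; auto).
    repeat rewrite ?Rmult_0_l, ?Rmult_0_r, ?Rplus_0_r, ?Rplus_0_l, ?Rmult_1_l, ?Rmult_1_r.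
    unfold vsub, vscal, vadd, zu, zv, zuu, zvv; cbn [Defs.c1 Defs.c2 Defs.c3 Defs.c4].
    f_equal; field; auto. }
  unfold HH; rewrite HV. unfold ip; cbn [Defs.c1 Defs.c2 Defs.c3 Defs.c4].
  match goal with |- ?L = ?R => assert (K: L - R = 1/4*(2*p/r*(a*a'+b*b'-p*p') + p^2/r^2*(a^2+b^2-p^2-1) - (c^2+s^2-1)*(p'+(1+p^2)/r)^2)) by (field; auto) end.
  rewrite E1, E2, E3 in K. apply Rminus_diag_uniq. rewrite K. field; auto.
Qed.

Lemma ip_facts (a b p r c s : R) :
  a^2+b^2-p^2 = 1 -> c^2+s^2 = 1 ->
  metric_det (mkV4 a b (p*c) (p*s)) (mkV4 0 0 (-(r*s)) (r*c)) = - r^2.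
Proof.
  intros E1 E3. unfold metric_det, ip; cbn [Defs.c1 Defs.c2 Defs.c3 Defs.c4].
  match goal with |- ?L = ?R => assert (K: L - R = -r^2*((a^2+b^2-p^2 - p^2*(c^2+s^2-1))*(c^2+s^2) - 1)) by ring end.
  rewrite E1, E3 in K. apply Rminus_diag_uniq. rewrite K. ring.
Qed.

Lemma direct_alg (W p p' r c0 s0 eta sq s C : R) :
  0 < r -> 0 < W -> W * W = 1 + p^2 -> c0^2+s0^2 = 1 -> eta^2 = 1 ->
  sq * sq = (r*p'+p^2+1)^2 + s*(4*C^2*r^2*(1+p^2)) ->
  let ph := eta * sq / (r * (1 + p^2)) in
  let a' := p*p'/W*c0 + W*(- s0*ph) in
  let b' := p*p'/W*s0 + W*(c0*ph) in
  1/4*(a'^2+b'^2-p'^2-2*p'/r-(1+p^2)/r^2) = s*C^2.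
Proof.
  intros Hr HW HWW Hc He Hsq ph a' b'.
  assert (Hp : 0 < 1 + p^2) by nra.
  replace (a'^2+b'^2) with ((p*p'/W)^2 + W^2*ph^2).
  2:{ transitivity (((p*p'/W)^2 + W^2*ph^2)*(c0^2+s0^2)). rewrite Hc; ring.
      unfold a', b'. unfold Rdiv; ring. }
  replace ((p*p'/W)^2) with (p^2*p'^2/(W*W)) by (field; lra).
  replace (W^2) with (W*W) by ring. rewrite HWW.
  unfold ph. replace ((eta * sq / (r * (1 + p ^ 2)))^2) with (eta^2*(sq*sq)/(r^2*(1+p^2)^2)) by (field; lra).
  rewrite He, Hsq. field. lra.
Qed.

Lemma direct_part :
  (forall (I : R -> Prop) (r r1 r2 phi x1 x2 : R -> R) (C s eta : R),
    is_open_interval I ->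
    smooth_on I r ->
    (forall u, I u -> derivable_pt_lim r u (r1 u)) ->
    (forall u, I u -> derivable_pt_lim r1 u (r2 u)) ->
    (forall u, I u -> 0 < r u) ->
    C <> 0 ->
    (eta = 1 \/ eta = -1) ->
    (s = 1 \/ s = -1) ->
    (forall u, I u -> 0 < Rfun s C r r1 r2 u) ->
    (forall u, I u -> derivable_pt_lim phi u
        (eta * sqrt (Rfun s C r r1 r2 u) / (r u * (1 + r1 u ^ 2)))) ->
    (forall u, I u -> derivable_pt_lim x1 u (sqrt (1 + r1 u ^ 2) * cos (phi u))) ->
    (forall u, I u -> derivable_pt_lim x2 u (sqrt (1 + r1 u ^ 2) * sin (phi u))) ->
    (exists c' : R -> V4, forall u, I u ->
        deriv4 (profile x1 x2 r) u (c' u) /\ ip (c' u) (c' u) = 1) /\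
    (exists x1d x2d x1dd x2dd : R -> R, forall u, I u ->
        derivable_pt_lim x1 u (x1d u) /\ derivable_pt_lim x2 u (x2d u) /\
        derivable_pt_lim x1d u (x1dd u) /\ derivable_pt_lim x2d u (x2dd u) /\
        x1d u * x2dd u - x1dd u * x2d u <> 0) /\
    (exists zu zv zuu zuv zvv : R -> R -> V4,
        partials2 (rot_surface x1 x2 r) (fun u _ => I u) zu zv zuu zuv zvv /\
        forall u v, I u ->
          lorentz_at (zu u v) (zv u v) /\
          HH (zu u v) (zv u v) (zuu u v) (zuv u v) (zvv u v) = s * C ^ 2)).
Proof.
  intros I r r1 r2 phi x1 x2 C s eta HI Hsm Hr1 Hr2 Hpos HC Heta Hs HR Hphi Hx1 Hx2.
  set (W := fun u => sqrt (1 + r1 u ^ 2)).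
  set (dphi := fun u => eta * sqrt (Rfun s C r r1 r2 u) / (r u * (1 + r1 u ^ 2))).
  set (Wd := fun u => r1 u * r2 u / W u).
  set (x1d := fun u => W u * cos (phi u)).
  set (x2d := fun u => W u * sin (phi u)).
  set (x1dd := fun u => Wd u * cos (phi u) + W u * (- sin (phi u) * dphi u)).
  set (x2dd := fun u => Wd u * sin (phi u) + W u * (cos (phi u) * dphi u)).
  assert (Hp : forall u, 0 < 1 + r1 u ^ 2) by (intro u; nra).
  assert (HWp : forall u, 0 < W u) by (intro u; apply sqrt_lt_R0; auto).
  assert (HWW : forall u, W u * W u = 1 + r1 u ^ 2) by (intro u; apply sqrt_sqrt; left; auto).
  assert (Hcs : forall t, cos t ^ 2 + sin t ^ 2 = 1) by (intro t; rewrite <- (sin2_cos2 t); unfold Rsqr; ring).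
  assert (dW : forall u, I u -> derivable_pt_lim W u (Wd u)).
  { intros u Hu. unfold W. eapply deq. apply dsqrtc. apply Hp.
    apply dplus. apply dconst. apply dsq. apply Hr2; auto.
    unfold Wd, W. field. apply Rgt_not_eq, sqrt_lt_R0, Hp. }
  assert (dx1 : forall u, I u -> derivable_pt_lim x1d u (x1dd u)).
  { intros u Hu. unfold x1d, x1dd. eapply deq. apply dmul. apply dW; auto. apply dcosc. apply Hphi; auto. reflexivity. }
  assert (dx2 : forall u, I u -> derivable_pt_lim x2d u (x2dd u)).
  { intros u Hu. unfold x2d, x2dd. eapply deq. apply dmul. apply dW; auto. apply dsinc. apply Hphi; auto. reflexivity. }
  assert (Hx1' : forall u, I u -> derivable_pt_lim x1 u (x1d u)) by exact Hx1.
  assert (Hx2' : forall u, I u -> derivable_pt_lim x2 u (x2d u)) by exact Hx2.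
  assert (Hnorm : forall u, x1d u ^ 2 + x2d u ^ 2 - r1 u ^ 2 = 1).
  { intro u. unfold x1d, x2d. replace ((W u * cos (phi u)) ^ 2 + (W u * sin (phi u)) ^ 2) with ((W u * W u) * (cos (phi u) ^ 2 + sin (phi u) ^ 2)) by ring.
    rewrite Hcs, HWW. ring. }
  assert (Horth : forall u, x1d u * x1dd u + x2d u * x2dd u - r1 u * r2 u = 0).
  { intro u. unfold x1d, x2d, x1dd, x2dd.
    replace (W u * cos (phi u) * (Wd u * cos (phi u) + W u * (- sin (phi u) * dphi u)) +
      W u * sin (phi u) * (Wd u * sin (phi u) + W u * (cos (phi u) * dphi u))) with (W u * Wd u * (cos (phi u) ^ 2 + sin (phi u) ^ 2)) by ring.
    rewrite Hcs. unfold Wd. field. apply Rgt_not_eq, HWp. }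
  assert (Heta2 : eta ^ 2 = 1) by (destruct Heta; subst; ring).
  split; [| split].
  - exists (fun u => mkV4 (x1d u) (x2d u) (r1 u) 0). intros u Hu. split.
    + unfold deriv4, profile; cbn [Defs.c1 Defs.c2 Defs.c3 Defs.c4].
      repeat split; auto. apply dconst.
    + unfold ip; cbn [Defs.c1 Defs.c2 Defs.c3 Defs.c4]. rewrite <- (Hnorm u). ring.
  - exists x1d, x2d, x1dd, x2dd. intros u Hu. repeat split; auto.
    replace (x1d u * x2dd u - x1dd u * x2d u) with ((W u * W u) * (cos (phi u) ^ 2 + sin (phi u) ^ 2) * dphi u)
      by (unfold x1d, x2d, x1dd, x2dd; ring).
    rewrite Hcs, HWW. unfold dphi.
    assert (0 < sqrt (Rfun s C r r1 r2 u)) by (apply sqrt_lt_R0; auto).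
    assert (0 < r u) by auto. specialize (Hp u).
    assert (Hq: eta * sqrt (Rfun s C r r1 r2 u) / (r u * (1 + r1 u ^ 2)) <> 0).
    { unfold Rdiv. apply Rmult_integral_contrapositive_currified. apply Rmult_integral_contrapositive_currified.
      destruct Heta; subst; lra. lra. apply Rinv_neq_0_compat. nra. }
    rewrite Rmult_1_r. apply Rmult_integral_contrapositive_currified; [lra | exact Hq].
  - exists (fun u v => mkV4 (x1d u) (x2d u) (r1 u * cos v) (r1 u * sin v)),
      (fun u v => mkV4 0 0 (-(r u * sin v)) (r u * cos v)),
      (fun u v => mkV4 (x1dd u) (x2dd u) (r2 u * cos v) (r2 u * sin v)),
      (fun u v => mkV4 0 0 (-(r1 u * sin v)) (r1 u * cos v)),
      (fun u v => mkV4 0 0 (-(r u * cos v)) (-(r u * sin v))).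
    split.
    + unfold partials2, part_u, part_v, deriv4, rot_surface; cbn [Defs.c1 Defs.c2 Defs.c3 Defs.c4].
      repeat split.
      all: first [ apply Hx1'; auto | apply Hx2'; auto | apply dx1; auto | apply dx2; auto | idtac ].
      all: try apply dconst.
      all: try (eapply deq; [ repeat first [apply dopp | apply dmul | apply dconst | apply dcos | apply dsin | (apply Hr1; auto) | (apply Hr2; auto) ] | cbv beta; ring ]).
    + intros u v Hu. split.
      * unfold lorentz_at. rewrite ip_facts; auto.
        assert (0 < r u) by auto. nra.
      * rewrite HH_formula; auto.
        2: apply Rgt_not_eq; auto.
        unfold x1dd, x2dd, Wd, dphi.
        apply direct_alg; auto.
        rewrite sqrt_sqrt. unfold Rfun. ring. left; auto.
  apply Hpos; auto.
Qed.

Lemma v4_eta (w : V4) : w = mkV4 (Defs.c1 w) (Defs.c2 w) (Defs.c3 w) (Defs.c4 w).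
Proof. destruct w; reflexivity. Qed.

Lemma ddiv f g x l1 l2 : derivable_pt_lim f x l1 -> derivable_pt_lim g x l2 -> g x <> 0 ->
  derivable_pt_lim (fun t => f t / g t) x ((l1 * g x - l2 * f x) / (g x * g x)).
Proof. intros. exact (derivable_pt_lim_div f g x l1 l2 H H0 H1). Qed.

Lemma open_ball (I : R -> Prop) x : is_open_interval I -> I x ->
  exists eps, 0 < eps /\ forall y, Rabs (y - x) < eps -> I y.
Proof. intros [_ [H _]] Hx. apply H; auto. Qed.

Lemma sign_const (I : R -> Prop) (h : R -> R) : is_open_interval I ->
  (forall u, I u -> continuity_pt h u) -> (forall u, I u -> h u <> 0) ->
  forall u v, I u -> I v -> 0 < h u * h v.
Proof.
  intros HI Hc Hn.
  assert (Hconv : forall x y w, I x -> I w -> x <= y -> y <= w -> I y) by (destruct HI as [_ [_ H]]; exact H).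
  assert (L : forall x y, I x -> I y -> x < y -> 0 < h x * h y).
  { intros x y Hx Hy Hxy.
    destruct (Rlt_or_le 0 (h x * h y)) as [H|H]; auto. exfalso.
    assert (hx := Hn x Hx). assert (hy := Hn y Hy).
    destruct (Rlt_or_le (h x) 0) as [H1|H1].
    - assert (H2 : 0 < h y) by (destruct (Rlt_or_le 0 (h y)); auto; nra).
      destruct (Ranalysis5.IVT_interv h x y) as [z [Hz Hz0]]; auto.
      intros a Ha. apply Hc. apply Hconv with x y; tauto.
      apply (Hn z); auto. apply Hconv with x y; tauto.
    - assert (H1' : 0 < h x) by (destruct H1; auto; congruence).
      assert (H2 : h y < 0) by (destruct (Rlt_or_le (h y) 0); auto; nra).
      destruct (Ranalysis5.IVT_interv (fun t => - h t) x y) as [z [Hz Hz0]]; auto.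
      intros a Ha. apply (continuity_pt_opp h). apply Hc. apply Hconv with x y; tauto.
      lra. lra.
      apply (Hn z); auto. apply Hconv with x y; tauto. lra. }
  intros u v Hu Hv. destruct (Rtotal_order u v) as [H|[H|H]].
  - apply L; auto.
  - subst. assert (hx := Hn v Hv). nra.
  - rewrite Rmult_comm. apply L; auto.
Qed.

Lemma const_on (I : R -> Prop) (h : R -> R) : is_open_interval I ->
  (forall u, I u -> derivable_pt_lim h u 0) -> forall u v, I u -> I v -> h u = h v.
Proof.
  intros HI Hd u v Hu Hv.
  assert (Hconv : forall x y w, I x -> I w -> x <= y -> y <= w -> I y) by (destruct HI as [_ [_ H]]; exact H).
  assert (Hin : forall x, Rmin u v <= x <= Rmax u v -> I x).
  { intros x Hx. destruct (Rle_dec u v).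
    - rewrite Rmin_left, Rmax_right in Hx by lra. apply Hconv with u v; tauto.
    - rewrite Rmin_right, Rmax_left in Hx by lra. apply Hconv with v u; tauto. }
  destruct (MVT_gen h u v (fun _ => 0)) as [c [_ Hc]].
  - intros x Hx. apply is_derive_Reals. apply Hd. apply Hin; lra.
  - intros x Hx. apply derivable_continuous_pt. exists 0. apply Hd. apply Hin; lra.
  - lra.
Qed.

Lemma angle (e1 e2 : R) : e1^2 + e2^2 = 1 -> exists t, cos t = e1 /\ sin t = e2.
Proof.
  intros H. assert (B : -1 <= e1 <= 1) by nra.
  assert (S : sqrt (1 - e1²) = Rabs e2).
  { rewrite <- sqrt_Rsqr_abs. f_equal. unfold Rsqr. lra. }
  destruct (Rle_or_lt 0 e2).
  - exists (acos e1). rewrite cos_acos, sin_acos, S by auto. rewrite Rabs_right by lra. auto.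
  - exists (- acos e1). rewrite cos_neg, sin_neg, cos_acos, sin_acos, S by auto.
    rewrite Rabs_left by lra. split; auto; ring.
Qed.

Lemma smooth_second (J I : R -> Prop) f fd fdd : is_open_interval J -> smooth_on J f ->
  (forall u, J u -> derivable_pt_lim f u (fd u)) -> is_open_interval I -> (forall u, I u -> J u) ->
  (forall u, I u -> derivable_pt_lim fd u (fdd u)) -> forall u, I u -> continuity_pt fdd u.
Proof.
  intros HJ [d [Hd0 Hd]] Hf HI HIJ Hfd.
  assert (C1 : forall x, J x -> d 1%nat x = fd x).
  { intros x Hx. apply (uniqueness_limite f x). 2: apply Hf; auto.
    apply dext with (d 0%nat). destruct (open_ball J x HJ Hx) as [e [He Hb]].
    exists e; split; auto. apply Hd; auto. }
  assert (C2 : forall x, I x -> fdd x = d 2%nat x).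
  { intros x Hx. apply (uniqueness_limite (d 1%nat) x). 2: apply Hd; auto.
    apply dext with fd. destruct (open_ball J x HJ (HIJ x Hx)) as [e [He Hb]].
    exists e; split; auto. intros y Hy. symmetry; apply C1; auto. apply Hfd; auto. }
  intros u Hu. apply cext with (d 2%nat).
  destruct (open_ball I u HI Hu) as [e [He Hb]]. exists e; split; auto.
  intros y Hy; symmetry; apply C2; auto.
  apply derivable_continuous_pt. exists (d 3%nat u). apply Hd; auto.
Qed.

Lemma conv_alg a b p a' b' p' r k : r <> 0 -> a^2+b^2-p^2 = 1 -> a*a'+b*b'-p*p' = 0 ->
  k = 1/4*(a'^2+b'^2-p'^2-2*p'/r-(1+p^2)/r^2) ->
  (r*p'+p^2+1)^2 + 4*k*r^2*(1+p^2) = (r*(a*b'-a'*b))^2.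
Proof.
  intros Hr E1 E2 ->.
  match goal with |- ?L = ?R => assert (K: L - R = r^2*(-(a^2+b^2-p^2-1)*(a'^2+b'^2) + (a*a'+b*b'-p*p')*(a*a'+b*b'+p*p'))) by (field; auto) end.
  rewrite E1, E2 in K. apply Rminus_diag_uniq. rewrite K. ring.
Qed.

Lemma Fprime_alg a b a' b' W c s : W <> 0 ->
  (a' * W - (a*a'+b*b')/W * a) / W^2 * c + a / W * (- s * ((a*b'-a'*b)/(W*W))) +
  ((b' * W - (a*a'+b*b')/W * b) / W^2 * s + b / W * (c * ((a*b'-a'*b)/(W*W))))
  = (c*a'+s*b')*(W*W-(a^2+b^2))/W^3.
Proof. intros; field; auto. Qed.

Lemma converse_part :
  (forall (J I : R -> Prop) (x1 x2 r x1d x2d r1 x1dd x2dd r2 : R -> R) (k : R),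
    is_open_interval J ->
    smooth_on J x1 -> smooth_on J x2 -> smooth_on J r ->
    (forall u, J u -> 0 < r u) ->
    (forall u, J u -> derivable_pt_lim x1 u (x1d u)) ->
    (forall u, J u -> derivable_pt_lim x2 u (x2d u)) ->
    (forall u, J u -> derivable_pt_lim r u (r1 u)) ->
    (forall u, J u -> x1d u ^ 2 + x2d u ^ 2 - r1 u ^ 2 = 1) ->
    is_open_interval I ->
    (forall u, I u -> J u) ->
    (forall u, I u -> derivable_pt_lim x1d u (x1dd u)) ->
    (forall u, I u -> derivable_pt_lim x2d u (x2dd u)) ->
    (forall u, I u -> derivable_pt_lim r1 u (r2 u)) ->
    (forall u, I u -> x1d u * x2dd u - x1dd u * x2d u <> 0) ->
    k <> 0 ->
    (exists zu zv zuu zuv zvv : R -> R -> V4,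
        partials2 (rot_surface x1 x2 r) (fun u _ => I u) zu zv zuu zuv zvv /\
        forall u v, I u -> HH (zu u v) (zv u v) (zuu u v) (zuv u v) (zvv u v) = k) ->
    exists (C s eta : R) (phi : R -> R),
      C <> 0 /\ (s = 1 \/ s = -1) /\ (eta = 1 \/ eta = -1) /\
      k = s * C ^ 2 /\
      (forall u, I u -> 0 < Rfun s C r r1 r2 u) /\
      (forall u, I u -> derivable_pt_lim phi u
          (eta * sqrt (Rfun s C r r1 r2 u) / (r u * (1 + r1 u ^ 2)))) /\
      (forall u, I u -> x1d u = sqrt (1 + r1 u ^ 2) * cos (phi u)) /\
      (forall u, I u -> x2d u = sqrt (1 + r1 u ^ 2) * sin (phi u))).
Proof.
  intros J I x1 x2 r x1d x2d r1 x1dd x2dd r2 k HJ Hs1 Hs2 Hsr Hpos Hx1 Hx2 Hr Hnorm HI HIJ Hx1d Hx2d Hr1 HD Hk [zu [zv [zuu [zuv [zvv [Hpart HHk]]]]]].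
  destruct Hpart as [Pu [Pv [Puu [Puv Pvv]]]].
  assert (Hconv : forall x y w, I x -> I w -> x <= y -> y <= w -> I y) by (destruct HI as [_ [_ H]]; exact H).
  assert (Hball : forall u, I u -> exists eps, 0 < eps /\ forall y, Rabs (y-u) < eps -> I y) by (intros; apply open_ball; auto).
  assert (HballJ : forall u, J u -> exists eps, 0 < eps /\ forall y, Rabs (y-u) < eps -> J y) by (intros; apply open_ball; auto).
  assert (Horth : forall u, I u -> x1d u * x1dd u + x2d u * x2dd u - r1 u * r2 u = 0).
  { intros u Hu.
    assert (A : derivable_pt_lim (fun t => x1d t ^ 2 + x2d t ^ 2 - r1 t ^ 2) u (2 * x1d u * x1dd u + 2 * x2d u * x2dd u - 2 * r1 u * r2 u)).
    { apply dminus. apply dplus. apply dsq; auto. apply dsq; auto. apply dsq; auto. }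
    assert (B : derivable_pt_lim (fun t => x1d t ^ 2 + x2d t ^ 2 - r1 t ^ 2) u 0).
    { apply dext with (fun _ => 1). destruct (HballJ u (HIJ u Hu)) as [e [He Hb]]. exists e; split; auto.
      intros y Hy. symmetry. apply Hnorm. auto. apply dconst. }
    assert (E := uniqueness_limite _ _ _ _ A B). lra. }
  assert (Izu : forall u v, I u -> zu u v = mkV4 (x1d u) (x2d u) (r1 u * cos v) (r1 u * sin v)).
  { intros u v Hu. destruct (Pu u v Hu) as [A1 [A2 [A3 A4]]].
    unfold rot_surface in A1, A2, A3, A4; cbn [Defs.c1 Defs.c2 Defs.c3 Defs.c4] in A1, A2, A3, A4.
    rewrite (v4_eta (zu u v)). f_equal.
    - eapply uniqueness_limite. exact A1. apply Hx1; auto.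
    - eapply uniqueness_limite. exact A2. apply Hx2; auto.
    - eapply uniqueness_limite. exact A3. eapply deq. apply dmul. apply Hr; auto. apply dconst. cbv beta; ring.
    - eapply uniqueness_limite. exact A4. eapply deq. apply dmul. apply Hr; auto. apply dconst. cbv beta; ring. }
  assert (Izv : forall u v, I u -> zv u v = mkV4 0 0 (-(r u * sin v)) (r u * cos v)).
  { intros u v Hu. destruct (Pv u v Hu) as [A1 [A2 [A3 A4]]].
    unfold rot_surface in A1, A2, A3, A4; cbn [Defs.c1 Defs.c2 Defs.c3 Defs.c4] in A1, A2, A3, A4.
    rewrite (v4_eta (zv u v)). f_equal.
    - eapply uniqueness_limite. exact A1. apply dconst.
    - eapply uniqueness_limite. exact A2. apply dconst.
    - eapply uniqueness_limite. exact A3. eapply deq. apply dmul. apply dconst. apply dcos. cbv beta; ring.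
    - eapply uniqueness_limite. exact A4. eapply deq. apply dmul. apply dconst. apply dsin. cbv beta; ring. }
  assert (Izuu : forall u v, I u -> zuu u v = mkV4 (x1dd u) (x2dd u) (r2 u * cos v) (r2 u * sin v)).
  { intros u v Hu. destruct (Puu u v Hu) as [A1 [A2 [A3 A4]]].
    destruct (Hball u Hu) as [e [He Hb]].
    rewrite (v4_eta (zuu u v)). f_equal.
    - eapply uniqueness_limite. exact A1. apply dext with x1d. exists e; split; auto.
      intros y Hy. rewrite Izu; auto. apply Hx1d; auto.
    - eapply uniqueness_limite. exact A2. apply dext with x2d. exists e; split; auto.
      intros y Hy. rewrite Izu; auto. apply Hx2d; auto.
    - eapply uniqueness_limite. exact A3. apply dext with (fun t => r1 t * cos v). exists e; split; auto.
      intros y Hy. rewrite Izu; auto. eapply deq. apply dmul. apply Hr1; auto. apply dconst. cbv beta; ring.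
    - eapply uniqueness_limite. exact A4. apply dext with (fun t => r1 t * sin v). exists e; split; auto.
      intros y Hy. rewrite Izu; auto. eapply deq. apply dmul. apply Hr1; auto. apply dconst. cbv beta; ring. }
  assert (Izvv : forall u v, I u -> zvv u v = mkV4 0 0 (-(r u * cos v)) (-(r u * sin v))).
  { intros u v Hu. destruct (Pvv u v Hu) as [A1 [A2 [A3 A4]]].
    rewrite (v4_eta (zvv u v)). f_equal.
    - eapply uniqueness_limite. exact A1. apply dext with (fun _ => 0). exists 1; split; [lra|].
      intros y Hy. rewrite Izv; auto. apply dconst.
    - eapply uniqueness_limite. exact A2. apply dext with (fun _ => 0). exists 1; split; [lra|].
      intros y Hy. rewrite Izv; auto. apply dconst.
    - eapply uniqueness_limite. exact A3. apply dext with (fun t => -(r u * sin t)). exists 1; split; [lra|].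
      intros y Hy. rewrite Izv; auto. eapply deq. apply dopp. apply dmul. apply dconst. apply dsin. cbv beta; ring.
    - eapply uniqueness_limite. exact A4. apply dext with (fun t => r u * cos t). exists 1; split; [lra|].
      intros y Hy. rewrite Izv; auto. eapply deq. apply dmul. apply dconst. apply dcos. cbv beta; ring. }
  assert (KU : forall u, I u -> k = 1/4*(x1dd u ^2 + x2dd u ^2 - r2 u ^2 - 2*r2 u / r u - (1 + r1 u^2)/r u^2)).
  { intros u Hu. rewrite <- (HHk u 0 Hu). rewrite Izu, Izv, Izuu, Izvv, (v4_eta (zuv u 0)) by auto.
    apply HH_formula. apply Rgt_not_eq, Hpos; auto. apply Hnorm; auto. apply Horth; auto.
    rewrite cos_0, sin_0; ring. }
  assert (SC : exists s C, C <> 0 /\ (s = 1 \/ s = -1) /\ k = s * C ^ 2).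
  { destruct (Rlt_or_le 0 k) as [Hk0|Hk0].
    - exists 1, (sqrt k). split; [apply Rgt_not_eq, sqrt_lt_R0; auto|]. split; [auto|].
      rewrite pow2_sqrt; lra.
    - assert (k < 0) by (destruct Hk0; auto; congruence).
      exists (-1), (sqrt (-k)). split; [apply Rgt_not_eq, sqrt_lt_R0; lra|]. split; [auto|].
      rewrite pow2_sqrt; lra. }
  destruct SC as [s [C [HC [Hs HkC]]]].
  set (D := fun u => x1d u * x2dd u - x1dd u * x2d u).
  assert (HRf : forall u, I u -> Rfun s C r r1 r2 u = (r u * D u)^2).
  { intros u Hu. unfold Rfun, D.
    replace (s * (4*C^2*r u^2*(1+r1 u^2))) with (4*k*r u^2*(1+r1 u^2)) by (rewrite HkC; ring).
    apply conv_alg. apply Rgt_not_eq, Hpos; auto. apply Hnorm; auto. apply Horth; auto. apply KU; auto. }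
  assert (cD : forall u, I u -> continuity_pt D u).
  { intros u Hu. unfold D.
    assert (c1d : continuity_pt x1d u) by (apply derivable_continuous_pt; exists (x1dd u); apply Hx1d; auto).
    assert (c2d : continuity_pt x2d u) by (apply derivable_continuous_pt; exists (x2dd u); apply Hx2d; auto).
    assert (c1dd := smooth_second J I x1 x1d x1dd HJ Hs1 Hx1 HI HIJ Hx1d u Hu).
    assert (c2dd := smooth_second J I x2 x2d x2dd HJ Hs2 Hx2 HI HIJ Hx2d u Hu).
    apply continuity_pt_minus; apply continuity_pt_mult; auto. }
  assert (Hsg := sign_const I D HI cD HD).
  destruct (proj1 HI) as [u0 Hu0].
  assert (ETA : exists eta, (eta = 1 \/ eta = -1) /\ forall u, I u -> eta * Rabs (D u) = D u).
  { destruct (Rlt_or_le 0 (D u0)) as [H0|H0].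
    - exists 1. split; auto. intros u Hu. specialize (Hsg u u0 Hu Hu0).
      rewrite Rabs_right; [ring|]. nra.
    - assert (D u0 < 0) by (destruct H0; auto; exfalso; apply (HD u0); auto).
      exists (-1). split; auto. intros u Hu. specialize (Hsg u u0 Hu Hu0).
      rewrite Rabs_left; [ring|]. nra. }
  destruct ETA as [eta [Heta HetaD]].
  set (f := fun t => D t / (1 + r1 t ^ 2)).
  assert (Hp : forall u, 0 < 1 + r1 u ^ 2) by (intro u; nra).
  assert (cf : forall u, I u -> continuity_pt f u).
  { intros u Hu. unfold f. apply continuity_pt_div; auto.
    apply derivable_continuous_pt. exists (0 + 2 * r1 u * r2 u). apply dplus. apply dconst. apply dsq; auto.
    apply Rgt_not_eq, Hp. }
  set (W := fun t => sqrt (1 + r1 t ^ 2)).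
  assert (HWp : forall u, 0 < W u) by (intro u; apply sqrt_lt_R0; auto).
  assert (HWW : forall u, W u * W u = 1 + r1 u ^ 2) by (intro u; apply sqrt_sqrt; left; auto).
  destruct (angle (x1d u0 / W u0) (x2d u0 / W u0)) as [th0 [Hth1 Hth2]].
  { replace ((x1d u0 / W u0) ^ 2 + (x2d u0 / W u0) ^ 2) with ((x1d u0 ^ 2 + x2d u0 ^ 2) / (W u0 * W u0))
      by (field; apply Rgt_not_eq, HWp).
    rewrite HWW. replace (x1d u0 ^ 2 + x2d u0 ^ 2) with (1 + r1 u0 ^ 2). field. apply Rgt_not_eq, Hp.
    rewrite <- (Hnorm u0); auto. ring. }
  set (phi := fun t => th0 + RInt f u0 t).
  assert (Hphi : forall u, I u -> derivable_pt_lim phi u (f u)).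
  { intros u Hu. unfold phi. eapply deq. apply dplus. apply dconst. apply is_derive_Reals.
    apply (is_derive_RInt f (fun t => RInt f u0 t) u0 u).
    - destruct (Hball u Hu) as [e [He Hb]]. apply ball_locally. exists e; split; auto.
      intros y Hy. apply (@RInt_correct R_CompleteNormedModule). apply (@ex_RInt_continuous R_CompleteNormedModule). intros z Hz.
      apply continuity_pt_filterlim. apply cf.
      destruct (Rle_dec u0 y).
      + rewrite Rmin_left, Rmax_right in Hz by lra. apply Hconv with u0 y; auto; tauto.
      + rewrite Rmin_right, Rmax_left in Hz by lra. apply Hconv with y u0; auto; tauto.
    - apply continuity_pt_filterlim. apply cf; auto.
    - ring. }
  assert (dW : forall u, I u -> derivable_pt_lim W u (/ (2 * W u) * (0 + 2 * r1 u * r2 u))).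
  { intros u Hu. unfold W. eapply deq. apply dsqrtc. apply Hp. apply dplus. apply dconst. apply dsq; auto. reflexivity. }
  assert (HnI : forall u, I u -> x1d u ^ 2 + x2d u ^ 2 = W u * W u).
  { intros u Hu. rewrite HWW. rewrite <- (Hnorm u); auto. ring. }
  set (F := fun t => x1d t / W t * cos (phi t) + x2d t / W t * sin (phi t)).
  set (G := fun t => x2d t / W t * cos (phi t) - x1d t / W t * sin (phi t)).
  assert (dF : forall u, I u -> derivable_pt_lim F u 0).
  { intros u Hu. unfold F. eapply deq. apply dplus; apply dmul.
    apply ddiv; [apply Hx1d; auto | apply dW; auto | apply Rgt_not_eq, HWp].
    apply dcosc, Hphi; auto.
    apply ddiv; [apply Hx2d; auto | apply dW; auto | apply Rgt_not_eq, HWp].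
    apply dsinc, Hphi; auto.
    unfold f, D. assert (Ho := Horth u Hu). assert (Hn := HnI u Hu). assert (Hw := HWW u). assert (Hw0 := HWp u).
    set (a := x1d u) in *. set (b := x2d u) in *. set (a' := x1dd u) in *. set (b' := x2dd u) in *.
    set (p := r1 u) in *. set (p' := r2 u) in *. set (w := W u) in *. set (c := cos (phi u)). set (s0 := sin (phi u)).
    replace (1 + p^2) with (w*w) by lra. replace (0 + 2*p*p') with (2*(a*a'+b*b')) by lra.
    match goal with |- ?L = 0 => assert (K : L = (c*a'+s0*b')*(w*w-(a^2+b^2))/w^3) by (field; lra) end.
    rewrite K, <- Hn. field. lra. }
  assert (dG : forall u, I u -> derivable_pt_lim G u 0).
  { intros u Hu. unfold G. eapply deq. apply dminus; apply dmul.
    apply ddiv; [apply Hx2d; auto | apply dW; auto | apply Rgt_not_eq, HWp].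
    apply dcosc, Hphi; auto.
    apply ddiv; [apply Hx1d; auto | apply dW; auto | apply Rgt_not_eq, HWp].
    apply dsinc, Hphi; auto.
    unfold f, D. assert (Ho := Horth u Hu). assert (Hn := HnI u Hu). assert (Hw := HWW u). assert (Hw0 := HWp u).
    set (a := x1d u) in *. set (b := x2d u) in *. set (a' := x1dd u) in *. set (b' := x2dd u) in *.
    set (p := r1 u) in *. set (p' := r2 u) in *. set (w := W u) in *. set (c := cos (phi u)). set (s0 := sin (phi u)).
    replace (1 + p^2) with (w*w) by lra. replace (0 + 2*p*p') with (2*(a*a'+b*b')) by lra.
    match goal with |- ?L = 0 => assert (K : L = (c*b'-s0*a')*(w*w-(a^2+b^2))/w^3) by (field; lra) end.
    rewrite K, <- Hn. field. lra. }
  assert (Hphi0 : phi u0 = th0) by (unfold phi; rewrite RInt_point; exact (Rplus_0_r th0)).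
  assert (F1 : forall u, I u -> F u = 1).
  { intros u Hu. rewrite (const_on I F HI dF u u0 Hu Hu0). unfold F. rewrite Hphi0, Hth1, Hth2.
    replace (x1d u0 / W u0 * (x1d u0 / W u0) + x2d u0 / W u0 * (x2d u0 / W u0)) with ((x1d u0 ^ 2 + x2d u0 ^ 2) / (W u0 * W u0))
      by (field; apply Rgt_not_eq, HWp).
    rewrite HnI; auto. field. apply Rgt_not_eq, HWp. }
  assert (G0 : forall u, I u -> G u = 0).
  { intros u Hu. rewrite (const_on I G HI dG u u0 Hu Hu0). unfold G. rewrite Hphi0, Hth1, Hth2. ring. }
  assert (Hcs : forall t, cos t ^ 2 + sin t ^ 2 = 1) by (intro t; rewrite <- (sin2_cos2 t); unfold Rsqr; ring).
  exists C, s, eta, phi. split; auto. split; auto. split; auto. split; auto. split.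
  { intros u Hu. rewrite HRf; auto. assert (0 < r u) by (apply Hpos; auto). assert (D u <> 0) by (apply HD; auto).
    assert (r u * D u <> 0) by (apply Rmult_integral_contrapositive_currified; lra).
    rewrite <- Rsqr_pow2. apply Rsqr_pos_lt. auto. }
  split.
  { intros u Hu. eapply deq. apply Hphi; auto. rewrite HRf; auto. assert (0 < r u) by (apply Hpos; auto).
    rewrite <- Rsqr_pow2, sqrt_Rsqr_abs, Rabs_mult, (Rabs_right (r u)) by lra.
    replace (eta * (r u * Rabs (D u))) with (r u * (eta * Rabs (D u))) by ring.
    rewrite HetaD by auto. unfold f. field. split. apply Rgt_not_eq, Hp. lra. }
  split.
  { intros u Hu. assert (Hf1 := F1 u Hu). assert (Hg0 := G0 u Hu). unfold F, G in Hf1, Hg0.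
    change (sqrt (1 + r1 u ^ 2)) with (W u). assert (Hw0 := HWp u). assert (Hc := Hcs (phi u)).
    set (c := cos (phi u)) in *. set (s0 := sin (phi u)) in *. set (w := W u) in *. set (a := x1d u) in *. set (b := x2d u) in *.
    transitivity (w * ((a/w*c + b/w*s0)*c - (b/w*c - a/w*s0)*s0)).
    - replace (w * ((a/w*c + b/w*s0)*c - (b/w*c - a/w*s0)*s0)) with (a*(c^2+s0^2)) by (field; lra). rewrite Hc; ring.
    - rewrite Hf1, Hg0; ring. }
  { intros u Hu. assert (Hf1 := F1 u Hu). assert (Hg0 := G0 u Hu). unfold F, G in Hf1, Hg0.
    change (sqrt (1 + r1 u ^ 2)) with (W u). assert (Hw0 := HWp u). assert (Hc := Hcs (phi u)).
    set (c := cos (phi u)) in *. set (s0 := sin (phi u)) in *. set (w := W u) in *. set (a := x1d u) in *. set (b := x2d u) in *.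
    transitivity (w * ((a/w*c + b/w*s0)*s0 + (b/w*c - a/w*s0)*c)).
    - replace (w * ((a/w*c + b/w*s0)*s0 + (b/w*c - a/w*s0)*c)) with (b*(c^2+s0^2)) by (field; lra). rewrite Hc; ring.
    - rewrite Hf1, Hg0; ring. }
Qed.

Theorem theorem3p1 :
  (* direct part *)
  (forall (I : R -> Prop) (r r1 r2 phi x1 x2 : R -> R) (C s eta : R),
    is_open_interval I ->
    smooth_on I r ->
    (forall u, I u -> derivable_pt_lim r u (r1 u)) ->
    (forall u, I u -> derivable_pt_lim r1 u (r2 u)) ->
    (forall u, I u -> 0 < r u) ->
    C <> 0 ->
    (eta = 1 \/ eta = -1) ->
    (s = 1 \/ s = -1) ->
    (forall u, I u -> 0 < Rfun s C r r1 r2 u) ->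
    (forall u, I u -> derivable_pt_lim phi u
        (eta * sqrt (Rfun s C r r1 r2 u) / (r u * (1 + r1 u ^ 2)))) ->
    (forall u, I u -> derivable_pt_lim x1 u (sqrt (1 + r1 u ^ 2) * cos (phi u))) ->
    (forall u, I u -> derivable_pt_lim x2 u (sqrt (1 + r1 u ^ 2) * sin (phi u))) ->
    (* c is spacelike, parametrized by arc length *)
    (exists c' : R -> V4, forall u, I u ->
        deriv4 (profile x1 x2 r) u (c' u) /\ ip (c' u) (c' u) = 1) /\
    (* x1' x2'' - x1'' x2' <> 0 on I *)
    (exists x1d x2d x1dd x2dd : R -> R, forall u, I u ->
        derivable_pt_lim x1 u (x1d u) /\ derivable_pt_lim x2 u (x2d u) /\
        derivable_pt_lim x1d u (x1dd u) /\ derivable_pt_lim x2d u (x2dd u) /\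
        x1d u * x2dd u - x1dd u * x2d u <> 0) /\
    (* the rotational surface is Lorentz with <H,H> = s C^2 *)
    (exists zu zv zuu zuv zvv : R -> R -> V4,
        partials2 (rot_surface x1 x2 r) (fun u _ => I u) zu zv zuu zuv zvv /\
        forall u v, I u ->
          lorentz_at (zu u v) (zv u v) /\
          HH (zu u v) (zv u v) (zuu u v) (zuv u v) (zvv u v) = s * C ^ 2))
  /\
  (* converse *)
  (forall (J I : R -> Prop) (x1 x2 r x1d x2d r1 x1dd x2dd r2 : R -> R) (k : R),
    is_open_interval J ->
    smooth_on J x1 -> smooth_on J x2 -> smooth_on J r ->
    (forall u, J u -> 0 < r u) ->
    (forall u, J u -> derivable_pt_lim x1 u (x1d u)) ->
    (forall u, J u -> derivable_pt_lim x2 u (x2d u)) ->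
    (forall u, J u -> derivable_pt_lim r u (r1 u)) ->
    (forall u, J u -> x1d u ^ 2 + x2d u ^ 2 - r1 u ^ 2 = 1) ->
    is_open_interval I ->
    (forall u, I u -> J u) ->
    (forall u, I u -> derivable_pt_lim x1d u (x1dd u)) ->
    (forall u, I u -> derivable_pt_lim x2d u (x2dd u)) ->
    (forall u, I u -> derivable_pt_lim r1 u (r2 u)) ->
    (forall u, I u -> x1d u * x2dd u - x1dd u * x2d u <> 0) ->
    k <> 0 ->
    (exists zu zv zuu zuv zvv : R -> R -> V4,
        partials2 (rot_surface x1 x2 r) (fun u _ => I u) zu zv zuu zuv zvv /\
        forall u v, I u -> HH (zu u v) (zv u v) (zuu u v) (zuv u v) (zvv u v) = k) ->
    exists (C s eta : R) (phi : R -> R),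
      C <> 0 /\ (s = 1 \/ s = -1) /\ (eta = 1 \/ eta = -1) /\
      k = s * C ^ 2 /\
      (forall u, I u -> 0 < Rfun s C r r1 r2 u) /\
      (forall u, I u -> derivable_pt_lim phi u
          (eta * sqrt (Rfun s C r r1 r2 u) / (r u * (1 + r1 u ^ 2)))) /\
      (forall u, I u -> x1d u = sqrt (1 + r1 u ^ 2) * cos (phi u)) /\
      (forall u, I u -> x2d u = sqrt (1 + r1 u ^ 2) * sin (phi u))).
Proof. split; [exact direct_part | exact converse_part]. Qed.
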